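(* Let $P_n$ be the path with vertex set $\{1,\dots,n\}$ and edges $\{j,j+1\}$, and let $A$ be a set of $m$ vertices with $2\le m\le n$. The following are equivalent: (1) $A$ is a maximizer of $W$ on $P_n$; (2) $A$ is a local maximizer of $W$ on $P_n$; (3) if $m$ is even, $A=\{1,\dots,\frac m2\}\cup\{n-\frac m2+1,\dots,n\}$; and if $m$ is odd, $A=\{1,\dots,\frac{m-1}{2}\}\cup\{j\}\cup\{n-\frac{m-1}{2}+1,\dots,n\}$ for some integer $j$ with $\frac{m-1}{2}<j<n-\frac{m-1}{2}+1$.
   Context: $W(A)=\sum_{\{u,v\}\subseteq A,u\ne v}d(u,v)$ over unordered pairs, $d$ the shortest-path distance. $A$ is a maximizer of $W$ if $W(A)=\max\{W(B): B\subseteq V(P_n), |B|=|A|\}$. A perturbation of $A$ is a set $(A\setminus\{u\})\cup\{v\}$ with $u\in A$, $v\notin A$, $uv$ an edge; $A$ is a local maximizer of $W$ if $W(A)\ge W(B)$ for every perturbation $B$ of $A$ (i.e. $W(A)$ equals the maximum of $W$ over perturbations of $A$). *)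

(* Defs.v *)
From mathcomp Require Import all_boot.
Set Implicit Arguments. Unset Strict Implicit. Unset Printing Implicit Defensive.

(* The path P_n: vertex set {1,...,n}, represented by 'I_n, where the ordinal
   i : 'I_n stands for the vertex (i+1).  Edges are {j, j+1}. *)
Definition path_edge (n : nat) (u v : 'I_n) : bool :=
  (u.+1 == v :> nat) || (v.+1 == u :> nat).

Definition pdist (n : nat) (u v : 'I_n) : nat := ((u : nat) - v) + ((v : nat) - u).

Definition W (n : nat) (A : {set 'I_n}) : nat :=
  \sum_(u in A) \sum_(v in A | u < v) pdist u v.

Definition is_maximizer (n : nat) (A : {set 'I_n}) : Prop :=
  forall B : {set 'I_n}, #|B| = #|A| -> W B <= W A.

Definition is_perturbation (n : nat) (A B : {set 'I_n}) : Prop :=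
  exists u v : 'I_n, [/\ u \in A, v \notin A, path_edge u v &
                         B = (A :\ u) :|: [set v]].

Definition is_local_maximizer (n : nat) (A : {set 'I_n}) : Prop :=
  forall B : {set 'I_n}, is_perturbation A B -> W B <= W A.

(* Condition (3), in terms of vertex labels (i+1) in {1,...,n}. *)
Definition extremal_shape (n m : nat) (A : {set 'I_n}) : Prop :=
  if ~~ odd m then
    A = [set i : 'I_n | (i.+1 <= m./2) || (n - m./2 + 1 <= i.+1)]
  else
    exists j : nat, [/\ (m.-1)./2 < j, j < n - (m.-1)./2 + 1 &
      A = [set i : 'I_n | [|| i.+1 <= (m.-1)./2, i.+1 == j
                          | n - (m.-1)./2 + 1 <= i.+1]]].

(* Main.v *)
Require Import Defs.
From mathcomp Require Import all_boot zify.
Set Implicit Arguments. Unset Strict Implicit. Unset Printing Implicit Defensive.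

Section S.
Variable n : nat.
Implicit Types (S A B : {set 'I_n}) (u v a x y : 'I_n).

Lemma pdistC u v : pdist u v = pdist v u.
Proof. rewrite /pdist; lia. Qed.

Definition D S := \sum_(u in S) \sum_(v in S) pdist u v.

Lemma W2 S : D S = 2 * W S.
Proof.
rewrite /D /W.
have -> : \sum_(u in S) \sum_(v in S) pdist u v =
  \sum_(u in S) \sum_(v in S) ((if u < v then pdist u v else 0) + (if v < u then pdist v u else 0)).
  apply: eq_bigr => u _; apply: eq_bigr => v _.
  rewrite /pdist; case: ltngtP => H; lia.
under eq_bigr => u _ do rewrite big_split.
rewrite big_split /= [X in _ + X](exchange_big).
rewrite mul2n -addnn; congr (_ + _); apply: eq_bigr => u _; by rewrite big_mkcondr.
Qed.

Lemma D_add S x : x \notin S -> D (x |: S) = D S + 2 * \sum_(a in S) pdist a x.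
Proof.
move=> xS; rewrite /D.
have E1 : forall u, \sum_(v in x |: S) pdist u v = pdist u x + \sum_(v in S) pdist u v.
  move=> u; exact: (@big_setU1 _ _ _ _ x S (fun v => pdist u v)).
have E2 : \sum_(u in x |: S) \sum_(v in x |: S) pdist u v =
   \sum_(v in x |: S) pdist x v + \sum_(u in S) \sum_(v in x |: S) pdist u v.
  exact: (@big_setU1 _ _ _ _ x S (fun u => \sum_(v in x |: S) pdist u v)).
have E3 : \sum_(u in S) \sum_(v in x |: S) pdist u v =
   \sum_(u in S) pdist u x + \sum_(u in S) \sum_(v in S) pdist u v.
  rewrite -big_split; apply: eq_bigr => u _; exact: E1.
have E4 : \sum_(u in S) pdist x u = \sum_(u in S) pdist u x.
  apply: eq_bigr => u _; exact: pdistC.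
have E5 : pdist x x = 0 by rewrite /pdist; lia.
rewrite E2 E3 E1 E4 E5; lia.
Qed.

Lemma W_add S x : x \notin S -> W (x |: S) = W S + \sum_(a in S) pdist a x.
Proof. move=> xS; have := D_add xS; rewrite !W2; lia. Qed.

Lemma cnt_lt i : \sum_(a : 'I_n) (a < i : nat) = minn i n.
Proof.
rewrite -(big_mkord xpredT (fun a : nat => (a < i : nat))).
elim: n => [|k IH]; first by rewrite big_geq //; lia.
rewrite big_nat_recr //= IH; case: ltnP => /=; lia.
Qed.

Lemma cnt_all : \sum_(a : 'I_n) 1 = n.
Proof. by rewrite sum1_card card_ord. Qed.

Lemma cnt_ge i : \sum_(a : 'I_n) (i <= a : nat) = n - minn i n.
Proof.
have : \sum_(a : 'I_n) ((i <= a : nat) + (a < i : nat)) = n.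
  rewrite -[RHS]cnt_all; apply: eq_bigr => a _; case: ltnP => /=; lia.
rewrite big_split /= cnt_lt; lia.
Qed.

Lemma sum_sub S (F : 'I_n -> nat) : \sum_(a in S) F a <= \sum_(a : 'I_n) F a.
Proof.
rewrite big_mkcond /=; apply: leq_sum => a _; case: (a \in S) => //.
Qed.

Lemma sum_full S (P : pred 'I_n) : (forall a, P a -> a \in S) ->
  \sum_(a in S) (P a : nat) = \sum_(a : 'I_n) (P a : nat).
Proof.
move=> H; rewrite big_mkcond /=; apply: eq_bigr => a _.
case Pa: (P a); first by rewrite H.
by case: (a \in S).
Qed.

Lemma move_nat S (x y : nat) : x.+1 = y ->
  (forall a, a \in S -> (a : nat) <> x /\ (a : nat) <> y) ->
  \sum_(a in S) ((a : nat) - x + (x - a)) + \sum_(a in S) (a < x : nat) =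
  \sum_(a in S) ((a : nat) - y + (y - a)) + \sum_(a in S) (y < a : nat).
Proof.
move=> xy H; rewrite -!big_split; apply: eq_bigr => a aS.
have [h1 h2] := H a aS.
case: ltnP => /=; case: ltnP => /=; lia.
Qed.

Lemma card_sum S : #|S| = \sum_(a in S) 1.
Proof. by rewrite sum1_card. Qed.

Lemma perturb_W A u v : u \in A -> v \notin A -> (v : nat).+1 = u ->
  W ((A :\ u) :|: [set v]) <= W A ->
  #|A| <= (\sum_(a in A :\ u) (a < v : nat)).*2 + 1.
Proof.
move=> uA vA vu Hle.
set S := A :\ u.
have uS : u \notin S by rewrite !inE eqxx.
have vS : v \notin S by rewrite !inE negb_and vA orbT.
have eA : A = u |: S by rewrite /S setD1K.
have eB : (A :\ u) :|: [set v] = v |: S by rewrite setUC.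
rewrite eB {1}eA !W_add // in Hle.
have Hm := @move_nat S v u vu.
have H2 : forall a, a \in S -> (a : nat) <> v /\ (a : nat) <> u.
  move=> a aS; split=> /val_inj E; subst a; [by rewrite aS in vS | by rewrite aS in uS].
have {Hm} Hm := Hm H2.
have Hc : #|S| = \sum_(a in S) (a < v : nat) + \sum_(a in S) (u < a : nat).
  rewrite card_sum -big_split; apply: eq_bigr => a aS.
  have [h1 h2] := H2 a aS; case: ltnP => /=; case: ltnP => /=; lia.
have HA : #|A| = #|S| + 1 by rewrite eA cardsU1 uS; lia.
rewrite /pdist /= in Hle.
rewrite -addnn; move: Hm Hc HA Hle. set P := \sum_(a in S) (a - v + (v - a)). set Q := \sum_(a in S) (a - u + (u - a)). set L := \sum_(a in S) (a < v : nat). set R := \sum_(a in S) (u < a : nat). clearbody P Q L R S. move=> h1 h2 h3 h4.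
lia.
Qed.

Lemma perturb_W2 A u v : u \in A -> v \notin A -> (u : nat).+1 = v ->
  W ((A :\ u) :|: [set v]) <= W A ->
  #|A| <= (\sum_(a in A :\ u) (v < a : nat)).*2 + 1.
Proof.
move=> uA vA vu Hle.
set S := A :\ u.
have uS : u \notin S by rewrite !inE eqxx.
have vS : v \notin S by rewrite !inE negb_and vA orbT.
have eA : A = u |: S by rewrite /S setD1K.
have eB : (A :\ u) :|: [set v] = v |: S by rewrite setUC.
rewrite eB {1}eA !W_add // in Hle.
have Hm := @move_nat S u v vu.
have H2 : forall a, a \in S -> (a : nat) <> u /\ (a : nat) <> v.
  move=> a aS; split=> /val_inj E; subst a; [by rewrite aS in uS | by rewrite aS in vS].
have {}Hm := Hm H2.
have Hc : #|S| = \sum_(a in S) (a < u : nat) + \sum_(a in S) (v < a : nat).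
  rewrite card_sum -big_split; apply: eq_bigr => a aS.
  have [h1 h2] := H2 a aS; case: ltnP => /=; case: ltnP => /=; lia.
have HA : #|A| = #|S| + 1 by rewrite eA cardsU1 uS; lia.
rewrite /pdist /= in Hle.
rewrite -addnn; move: Hm Hc HA Hle.
set P := \sum_(a in S) (a - v + (v - a)). set Q := \sum_(a in S) (a - u + (u - a)).
set L := \sum_(a in S) (a < u : nat). set R := \sum_(a in S) (v < a : nat).
clearbody P Q L R S. move=> h1 h2 h3 h4. lia.
Qed.

Lemma left_in A : is_local_maximizer A -> forall i : 'I_n, (i : nat).*2.+1 < #|A| -> i \in A.
Proof.
move=> HL i0 Hi0; apply/negPn/negP => Hn0.
pose P := fun i : 'I_n => ((i : nat).*2.+1 < #|A|) && (i \notin A).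
have Pi0 : P i0 by rewrite /P Hi0 Hn0.
case: (arg_minnP (fun i : 'I_n => (i : nat)) Pi0) => i /andP [Hi Hn] Hmin.
have below : forall a : 'I_n, (a : nat) < i -> a \in A.
  move=> a ai; apply/negPn/negP => an.
  have : P a by rewrite /P an andbT; move: Hi; lia.
  by move/Hmin; lia.
have [u0 /andP [u0A iu0]] : exists u, (u \in A) && (i < u).
  apply/existsP; case: (boolP [exists x, (x \in A) && (i < x)]) => // Hne; move: Hne; rewrite negb_exists => /forallP Hno.
  have : #|A| <= i.
    rewrite card_sum; apply: leq_trans (_ : \sum_(a in A) (a < i : nat) <= _).
      apply: leq_sum => a aA; have := Hno a; rewrite aA /=.
      case: ltngtP => //= E _; have ai : a = i by apply: val_inj.
      by rewrite -ai aA in Hn.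
    apply: leq_trans (sum_sub _ _) _; rewrite cnt_lt; lia.
  move: Hi; lia.
pose Q := fun a : 'I_n => (a \in A) && (i < a).
have Qu0 : Q u0 by rewrite /Q u0A iu0.
case: (arg_minnP (fun i : 'I_n => (i : nat)) Qu0) => u /andP [uA iu] Humin.
have vlt : (u : nat).-1 < n by have := ltn_ord u; lia.
pose v := Ordinal vlt.
have vA : v \notin A.
  apply/negP => vA.
  case: (ltngtP i v) => E.
  - have : Q v by rewrite /Q vA E.
    by move/Humin; rewrite /=; lia.
  - move: E iu; rewrite /=; lia.
  - have ei : i = v by apply: val_inj.
    by rewrite ei vA in Hn.
have vu : (v : nat).+1 = u by rewrite /=; lia.
have Hle : W ((A :\ u) :|: [set v]) <= W A.
  apply: HL; exists u, v; split => //; rewrite /path_edge vu eqxx; by rewrite orbT.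
have := perturb_W uA vA vu Hle.
have : \sum_(a in A :\ u) (a < v : nat) <= i.
  apply: leq_trans (_ : \sum_(a in A :\ u) (a < i : nat) <= _).
    apply: leq_sum => a; rewrite !inE => /andP [au aA].
    case: (ltnP a v) => //= av; case: (ltnP a i) => //= ia.
    have : (i : nat) == a -> False.
      move=> /eqP E; have ai : a = i by apply: val_inj.
      by rewrite -ai aA in Hn.
    move=> H; have : Q a by rewrite /Q aA; apply/negPn/negP; rewrite -leqNgt => ai; apply: H; apply/eqP; lia.
    move/Humin; rewrite /= in av; lia.
  apply: leq_trans (sum_sub _ _) _; rewrite cnt_lt; lia.
move: Hi; lia.
Qed.

Lemma right_in A : is_local_maximizer A -> forall i : 'I_n, (n - (i : nat).+1).*2.+1 < #|A| -> i \in A.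
Proof.
move=> HL i0 Hi0; apply/negPn/negP => Hn0.
pose P := fun i : 'I_n => ((n - (i : nat).+1).*2.+1 < #|A|) && (i \notin A).
have Pi0 : P i0 by rewrite /P Hi0 Hn0.
case: (arg_maxnP (fun i : 'I_n => (i : nat)) Pi0) => i /andP [Hi Hn] Hmax.
have iltn := ltn_ord i.
have [u0 /andP [u0A iu0]] : exists u, (u \in A) && (u < i).
  apply/existsP; case: (boolP [exists x, (x \in A) && (x < i)]) => // Hne; move: Hne; rewrite negb_exists => /forallP Hno.
  have : #|A| <= n - (i : nat).+1.
    rewrite card_sum; apply: leq_trans (_ : \sum_(a in A) ((i : nat).+1 <= a : nat) <= _).
      apply: leq_sum => a aA; have := Hno a; rewrite aA /=.
      case: ltngtP => //= E _; have ai : a = i by apply: val_inj.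
      by rewrite -ai aA in Hn.
    apply: leq_trans (sum_sub _ _) _; rewrite cnt_ge; lia.
  move: Hi; lia.
pose Q := fun a : 'I_n => (a \in A) && (a < i).
have Qu0 : Q u0 by rewrite /Q u0A iu0.
case: (arg_maxnP (fun i : 'I_n => (i : nat)) Qu0) => u /andP [uA iu] Humax.
have vlt : (u : nat).+1 < n by lia.
pose v := Ordinal vlt.
have vA : v \notin A.
  apply/negP => vA.
  case: (ltngtP i v) => E.
  - move: E iu; rewrite /=; lia.
  - have : Q v by rewrite /Q vA E.
    by move/Humax; rewrite /=; lia.
  - have ei : i = v by apply: val_inj.
    by rewrite ei vA in Hn.
have uv : (u : nat).+1 = v by [].
have Hle : W ((A :\ u) :|: [set v]) <= W A.
  apply: HL; exists u, v; split => //; rewrite /path_edge uv eqxx //.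
have := perturb_W2 uA vA uv Hle.
have : \sum_(a in A :\ u) (v < a : nat) <= n - (i : nat).+1.
  apply: leq_trans (_ : \sum_(a in A :\ u) ((i : nat).+1 <= a : nat) <= _).
    apply: leq_sum => a; rewrite !inE => /andP [au aA].
    case: (ltnP v a) => //= av; case: (leqP (i : nat).+1 a) => //= ia.
    have : (i : nat) == a -> False.
      move=> /eqP E; have ai : a = i by apply: val_inj.
      by rewrite -ai aA in Hn.
    move=> H; have : Q a by rewrite /Q aA; apply/negPn/negP; rewrite -leqNgt => ai; apply: H; apply/eqP; lia.
    move/Humax; rewrite /= in av; lia.
  apply: leq_trans (sum_sub _ _) _; rewrite cnt_ge; lia.
move: Hi; lia.
Qed.

Definition core k := [set i : 'I_n | ((i : nat) < k) || (n - k <= i)].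

Definition nshape m A :=
  if ~~ odd m then A = core m./2
  else exists j0 : 'I_n, [/\ m./2 <= j0, (j0 : nat) < n - m./2 & A = j0 |: core m./2].

Lemma card_core k : k + k <= n -> #|core k| = k + k.
Proof.
move=> kn; rewrite card_sum big_mkcond /=.
rewrite (eq_bigr (fun a : 'I_n => ((a : nat) < k : nat) + (n - k <= a : nat))); last first.
  move=> a _; rewrite inE; case: (ltnP a k) => /= ?; case: (leqP (n - k) a) => /= ?; lia.
rewrite big_split /= cnt_lt cnt_ge; lia.
Qed.

Lemma local_shape A : is_local_maximizer A -> 2 <= #|A| -> nshape #|A| A.
Proof.
move=> HL m2.
set m := #|A|.
have hm : odd m + (m./2).*2 = m by rewrite odd_double_half.
have mn : m <= n by rewrite -[X in _ <= X]card_ord; apply: max_card.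
set k := m./2 in hm *.
have sub : core k \subset A.
  apply/subsetP => i; rewrite inE => /orP [ik | ik].
    apply: left_in => //; rewrite -/m; move: ik hm; case: (odd m) => /=; lia.
  apply: right_in => //; rewrite -/m; have := ltn_ord i; move: ik hm; case: (odd m) => /=; lia.
have cc : #|core k| = k + k by rewrite card_core //; move: hm mn; case: (odd m) => /=; lia.
rewrite /nshape -/k; case: ifP => oddm.
  apply/eqP; rewrite eq_sym eqEcard sub /= cc -/m; move: hm oddm; case: (odd m) => /=; lia.
have c1 : #|A :\: core k| == 1 by rewrite cardsDS // cc -/m; move: hm oddm; case: (odd m) => /=; lia.
case/cards1P: c1 => j0 Ej.
have j0in : j0 \in A :\: core k by rewrite Ej inE.
move: (j0in); rewrite !inE negb_or -leqNgt -ltnNge => /andP [/andP [h1 h2] _].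
exists j0; split => //.
apply/setP => z; rewrite in_setU1.
case zc: (z \in core k).
  rewrite orbT; exact: (subsetP sub z zc).
rewrite orbF; apply/idP/eqP.
  move=> zA; have : z \in A :\: core k by rewrite inE zc zA.
  by rewrite Ej inE => /eqP.
by move=> ->; move: j0in; rewrite inE => /andP [].
Qed.

Definition gsum k (t : nat) := \sum_(a in core k) ((a : nat) - t + (t - a)).

Lemma gsum_step k t : k + k <= n -> k <= t -> t.+1 < n - k -> gsum k t = gsum k t.+1.
Proof.
move=> kn kt tn.
have H := @move_nat (core k) t t.+1 erefl.
have H2 : forall a : 'I_n, a \in core k -> (a : nat) <> t /\ (a : nat) <> t.+1.
  move=> a; rewrite inE => /orP [] ?; lia.
have {}H := H H2.
have E1 : \sum_(a in core k) ((a : nat) < t : nat) = k.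
  rewrite (eq_bigr (fun a : 'I_n => ((a : nat) < k : nat))); last first.
    move=> a; rewrite inE => /orP [] ?; case: ltnP => /=; case: ltnP => /=; lia.
  rewrite sum_full; first by rewrite cnt_lt; lia.
  by move=> a ak; rewrite inE ak.
have E2 : \sum_(a in core k) (t.+1 < a : nat) = k.
  rewrite (eq_bigr (fun a : 'I_n => (n - k <= a : nat))); last first.
    move=> a; rewrite inE => /orP [] ?; case: ltnP => /=; case: leqP => /=; lia.
  rewrite sum_full; first by rewrite cnt_ge; lia.
  by move=> a ak; rewrite inE ak orbT.
rewrite E1 E2 in H; apply/eqP; rewrite -(eqn_add2r k); apply/eqP; exact: H.
Qed.

Lemma gsum_const k t : k + k <= n -> k <= t -> t < n - k -> gsum k t = gsum k k.
Proof.
move=> kn kt tn.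
have : forall d, k + d < n - k -> gsum k (k + d) = gsum k k.
  elim=> [|d IH] h; first by rewrite addn0.
  rewrite -IH; last lia.
  rewrite addnS; symmetry; apply: gsum_step => //; lia.
move=> /(_ (t - k)); rewrite subnKC //; apply; lia.
Qed.

Lemma shape_W m A B : nshape m A -> nshape m B -> (m./2) + (m./2) <= n -> W A = W B.
Proof.
rewrite /nshape; case: ifP => _; first by move=> -> ->.
set k := m./2 => -[j0 [h1 h2 ->]] [j1 [h3 h4 ->]] kn.
have nc : forall j : 'I_n, k <= j -> (j : nat) < n - k -> j \notin core k.
  move=> j ? ?; rewrite inE negb_or -leqNgt -ltnNge; apply/andP; split => //.
rewrite !W_add ?nc //.
have -> : \sum_(a in core k) pdist a j0 = gsum k j0 by [].
have -> : \sum_(a in core k) pdist a j1 = gsum k j1 by [].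
by rewrite (gsum_const kn h1 h2) (gsum_const kn h3 h4).
Qed.

Lemma max_local A : is_maximizer A -> is_local_maximizer A.
Proof.
move=> HM B [u [v [uA vA _ ->]]]; apply: HM.
rewrite setUC cardsU1 !inE negb_and vA orbT (cardsD1 u A) uA //.
Qed.

Lemma shape_max A : 2 <= #|A| -> nshape #|A| A -> is_maximizer A.
Proof.
move=> m2 HS C HC.
pose P := fun B : {set 'I_n} => #|B| == #|A|.
have PA : P A by rewrite /P.
case: (arg_maxnP (fun B => W B) PA) => Bs /eqP PBs Hmax.
have HBs : is_maximizer Bs by move=> B HB; apply: Hmax; rewrite /P HB PBs.
have SB := local_shape (max_local HBs) (leq_trans m2 (eq_leq (esym PBs))).
rewrite PBs in SB.
have mn : #|A| <= n by rewrite -[X in _ <= X]card_ord; apply: max_card.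
have : W A = W Bs.
  apply: (shape_W HS SB).
  have := odd_double_half #|A|; lia.
move=> ->; apply: Hmax; by rewrite /P HC.
Qed.

Lemma core_eq k : [set i : 'I_n | (i.+1 <= k) || (n - k + 1 <= i.+1)] = core k.
Proof. by apply/setP => i; rewrite !inE addn1 ltnS. Qed.

Lemma ns_ext m A : nshape m A <-> extremal_shape m A.
Proof.
rewrite /nshape /extremal_shape.
case: ifP => om; first by rewrite core_eq.
have hm := odd_double_half m; rewrite (negbFE om) in hm.
have -> : (m.-1)./2 = m./2.
  by rewrite -{1}hm add1n /= doubleK.
set k := m./2.
split.
  move=> [j0 [h1 h2 ->]]; exists j0.+1; split; [lia | lia |].
  apply: (iffLR (setP _ _)) => i. rewrite !inE eqSS addn1 ltnS.
  by rewrite orbCA.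
move=> [j [h1 h2 E]].
have jn : j.-1 < n by lia.
exists (Ordinal jn); split => /=; [lia | lia |].
rewrite E; apply/setP => i; rewrite !inE addn1 ltnS.
have -> : (i.+1 == j) = (i == Ordinal jn).
  apply/eqP/eqP => [H | ->]; [apply: val_inj => /=; lia | rewrite /=; lia].
by case: (i < k); case: (i == Ordinal jn) => //=.
Qed.

End S.

Theorem mainTheorem11 (n m : nat) (A : {set 'I_n}) :
  2 <= m -> m <= n -> #|A| = m ->
  (is_maximizer A <-> is_local_maximizer A) /\
  (is_local_maximizer A <-> extremal_shape m A).
Proof.
move=> m2 mn cA; subst m.
have LS := @local_shape n A.
have SM := @shape_max n A m2.
have ML := @max_local n A.
have NE := @ns_ext n #|A| A.
split; split.
- exact: ML.
- by move=> HL; apply: SM; apply: LS.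
- by move=> HL; apply/NE; apply: LS.
- by move=> HE; apply: ML; apply: SM; apply/NE.
Qed.
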